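(* Let $k\geq 2$, let $A$ and $B$ be $d\times d$ matrices with entries in $\mathbb{Z}[1/2,\zeta_{2^{k-1}}]$, and assume that $A+B\zeta_{2^k}$ is unitary. Then the $2d\times 2d$ matrix $A\otimes I_2+B\otimes\Lambda_k$ is unitary (and has entries in $\mathbb{Z}[1/2,\zeta_{2^{k-1}}]$).
   Context: $\zeta_n=e^{2\pi i/n}$; $\mathbb{Z}[1/2,\zeta_n]$ is the smallest subring of $\mathbb{C}$ containing $1/2$ and $\zeta_n$. $\Lambda_k=\begin{bmatrix}0&1\\ \zeta_{2^{k-1}}&0\end{bmatrix}$. *)

(* Defs.v *)
From HB Require Import structures.
From mathcomp Require Import all_boot all_order all_algebra.
From mathcomp Require Import complex mxtens.
From mathcomp Require Import reals trigo.
Set Implicit Arguments. Unset Strict Implicit. Unset Printing Implicit Defensive.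
Import Order.TTheory GRing.Theory Num.Theory.
Local Open Scope ring_scope.
Local Open Scope complex_scope.

Definition zeta (R : realType) (n : nat) : R[i] :=
  (cos (2 * pi / n%:R)) +i* (sin (2 * pi / n%:R)).

(* membership in Z[1/2, z], the smallest subring of C containing 1/2 and z:
   its elements are exactly p(z) / 2^m with p an integer polynomial. *)
Definition in_Z_half_zeta (R : realType) (z : R[i]) (x : R[i]) : Prop :=
  exists (p : {poly int}) (m : nat), x = (map_poly intr p).[z] / 2 ^+ m.

Definition adjmx (R : realType) m n (M : 'M[R[i]]_(m, n)) : 'M[R[i]]_(n, m) :=
  (map_mx (fun x => x^*) M)^T.

Definition unitary (R : realType) n (U : 'M[R[i]]_n) : Prop :=
  U *m adjmx U = 1%:M /\ adjmx U *m U = 1%:M.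

Definition Lambda (R : realType) (k : nat) : 'M[R[i]]_2 :=
  \matrix_(i < 2, j < 2)
    (if (i == 0%N :> nat) && (j == 1%N :> nat) then 1
     else if (i == 1%N :> nat) && (j == 0%N :> nat) then zeta R (2 ^ k.-1)
     else 0).

(* Main.v *)
Require Import Defs.
From HB Require Import structures.
From mathcomp Require Import all_boot all_order all_algebra.
From mathcomp Require Import complex mxtens.
From mathcomp Require Import reals trigo.
From mathcomp Require Import algC cyclotomic.
From mathcomp Require Import ring.
Import Order.TTheory GRing.Theory Num.Theory.
Local Open Scope ring_scope.
Set Implicit Arguments. Unset Strict Implicit.

Lemma Phi_min (j : nat) (g : {poly rat}) : (0 < j)%N ->
  g %| 'X^(2^j) + 1 -> (1 < size g)%N -> 'X^(2^j) + 1 %| g.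
Proof.
move=> j0 gP sg.
have [s hs] : exists s : algC, root (map_poly ratr g) s.
  by apply/closed_rootP; rewrite size_map_poly gtn_eqF.
have hPs : root (map_poly ratr ('X^(2^j) + 1 : {poly rat})) s.
  by apply: root_dvdp hs; rewrite dvdp_map.
have sM : s ^+ (2^j) = -1.
  move: hPs; rewrite /root rmorphD /= map_polyXn rmorph1 hornerD hornerXn hornerC.
  by rewrite addr_eq0 => /eqP.
have n1 : (-1 : algC) != 1.
  by rewrite -subr_eq0 -opprD oppr_eq0 (_ : 1 + 1 = 2%:R) // pnatr_eq0.
have prim : (2^j.+1).-primitive_root s.
  have s2 : s ^+ (2^j.+1) = 1 by rewrite expnS mulnC exprM sM sqrrN expr1n.
  have [m pm] := prim_order_exists (expn_gt0 2 j.+1) s2.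
  case/dvdn_pfactor => // i hi Dm; move: pm; rewrite Dm.
  case: (ltnP i j.+1) => [hij pm|hji]; last first.
    by rewrite (_ : i = j.+1) //; apply/eqP; rewrite eqn_leq hi hji.
  have : (2 ^ i %| 2 ^ j)%N by rewrite dvdn_Pexp2l.
  by rewrite (prim_order_dvd pm) sM (negbTE n1).
have [p0 [Dp0 _] Hp0] := minCpolyP s.
have sz : size p0 = (2^j).+1.
  rewrite -(size_map_poly (ratr : rat -> algC)) -Dp0 (minCpoly_cyclotomic prim) size_cyclotomic.
  rewrite totient_pfactor // mul1n.
  by [].
have p0g : p0 %| g by rewrite -Hp0.
have p0P : p0 %| 'X^(2^j) + 1 by rewrite -Hp0.
have : p0 %= 'X^(2^j) + 1.
  by rewrite -dvdp_size_eqp // sz size_polyDl ?size_polyXn ?size_poly1 // ltnS expn_gt0.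
by move/eqp_dvdl => <-.
Qed.

Lemma key (R : realType) (j : nat) (w : R[i]) (q : {poly rat}) : (0 < j)%N ->
  w ^+ (2^j) = -1 -> (map_poly (ratr : rat -> R[i]) q).[w] = 0 ->
  (map_poly (ratr : rat -> R[i]) q).[-w] = 0.
Proof.
move=> j0 wM qw.
have PhiE x : (map_poly (ratr : rat -> R[i]) ('X^(2^j) + 1)).[x] = x ^+ (2^j) + 1.
  by rewrite rmorphD /= map_polyXn rmorph1 hornerD hornerXn hornerC.
have Phi0 : ('X^(2^j) + 1 : {poly rat}) != 0.
  by rewrite -size_poly_eq0 size_polyDl ?size_polyXn ?size_poly1 // ltnS expn_gt0.
set g := gcdp q ('X^(2^j) + 1).
have rg : root (map_poly (ratr : rat -> R[i]) g) w.
  by rewrite /g gcdp_map root_gcd; apply/andP; split; apply/eqP; rewrite ?PhiE ?wM ?addNr.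
have g0 : g != 0 by rewrite /g gcdp_eq0 negb_and Phi0 orbT.
have sg : (1 < size g)%N.
  rewrite -(size_map_poly (ratr : rat -> R[i])); apply: root_size_gt1 rg.
  by rewrite map_poly_eq0.
have : 'X^(2^j) + 1 %| q.
  apply: dvdp_trans (dvdp_gcdl q _); exact: Phi_min (dvdp_gcdr _ _) sg.
case/dvdpP => r ->.
rewrite rmorphM hornerM PhiE.
case: j j0 wM {PhiE Phi0 g rg g0 sg} => // j _ wM.
by rewrite expnS exprM sqrrN -exprM -expnS wM addNr mulr0.
Qed.

Section Trig.
Local Open Scope complex_scope.
Variable R : realType.
Definition E (t : R) : R[i] := (cos t) +i* (sin t).
Lemma EM s t : E (s + t) = E s * E t.
Proof. rewrite /E cosD sinD; simpc. congr (_ +i* _). exact: addrC. Qed.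
Lemma E0 : E 0 = 1.
Proof. by rewrite /E cos0 sin0. Qed.
Lemma En t n : E t ^+ n = E (t *+ n).
Proof. elim: n => [|n IH]; first by rewrite expr0 mulr0n E0.
by rewrite exprS IH mulrS EM. Qed.
Lemma Ec t : conjc (E t) = E (- t).
Proof. by rewrite /E cosN sinN. Qed.
Lemma EEc t : E t * conjc (E t) = 1.
Proof. by rewrite Ec -EM subrr E0. Qed.
Lemma Epi : E pi = -1.
Proof. by rewrite /E cospi sinpi; apply/eqP; simpc. Qed.

Lemma zetaE n : zeta R n = E (2 * pi / n%:R). Proof. by []. Qed.
Lemma two_neq0 : (2 : R) != 0. Proof. by rewrite pnatr_eq0. Qed.
Lemma twoX_neq0 j : (2 ^+ j : R) != 0. Proof. by rewrite expf_neq0 // two_neq0. Qed.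
Lemma zeta_sq j : zeta R (2^j.+1) ^+ 2 = zeta R (2^j).
Proof.
rewrite !zetaE En; congr E; rewrite -mulr_natr !natrX exprS.
by field; rewrite twoX_neq0.
Qed.
Lemma zeta_half j : zeta R (2^j.+1) ^+ (2^j) = -1.
Proof.
rewrite !zetaE En -Epi; congr E; rewrite -[_ *+ (2 ^ j)]mulr_natr !natrX exprS.
by field; rewrite twoX_neq0.
Qed.
Lemma zeta_full n : (0 < n)%N -> zeta R n ^+ n = 1.
Proof.
move=> n0; rewrite !zetaE En -E0 /E -[_ *+ n]mulr_natr divfK ?pnatr_eq0 -?lt0n // mulr_natl.
by rewrite cos2pi sin2pi cos0 sin0.
Qed.
Lemma zeta_conj n : zeta R n * conjc (zeta R n) = 1.
Proof. exact: EEc. Qed.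
End Trig.

Section Track.
Variable R : realType.
Variable w : R[i].
Definition ev (q : {poly rat}) (x : R[i]) := (map_poly (ratr : rat -> R[i]) q).[x].
Definition Tr x y := exists q : {poly rat}, x = ev q w /\ y = ev q (-w).

Lemma Tr_add x y x' y' : Tr x y -> Tr x' y' -> Tr (x + x') (y + y').
Proof. by move=> [q [-> ->]] [q' [-> ->]]; exists (q + q'); rewrite /ev rmorphD !hornerD. Qed.
Lemma Tr_mul x y x' y' : Tr x y -> Tr x' y' -> Tr (x * x') (y * y').
Proof. by move=> [q [-> ->]] [q' [-> ->]]; exists (q * q'); rewrite /ev rmorphM !hornerM. Qed.
Lemma Tr_opp x y : Tr x y -> Tr (- x) (- y).
Proof. by move=> [q [-> ->]]; exists (- q); rewrite /ev rmorphN !hornerN. Qed.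
Lemma Tr_rat a : Tr (ratr a) (ratr a).
Proof. by exists a%:P; rewrite /ev map_polyC !hornerC. Qed.
Lemma Tr_nat n : Tr n%:R n%:R.
Proof. by have := Tr_rat n%:R; rewrite rmorph_nat. Qed.
Lemma Tr_w : Tr w (- w).
Proof. by exists 'X; rewrite /ev map_polyX !hornerX. Qed.
Lemma Tr_eval q a b : Tr a b -> Tr (ev q a) (ev q b).
Proof.
move=> [r [-> ->]]; exists (q \Po r).
by rewrite /ev map_comp_poly !horner_comp.
Qed.
Lemma Tr_sum (I : finType) (F G : I -> R[i]) :
  (forall i, Tr (F i) (G i)) -> Tr (\sum_i F i) (\sum_i G i).
Proof.
move=> H; apply: (big_ind2 Tr) => //; first exact: (Tr_nat 0).
by move=> ? ? ? ?; apply: Tr_add.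
Qed.
Lemma ev_conj q x : conjc (ev q x) = ev q (conjc x).
Proof.
rewrite /ev -horner_map; congr horner; rewrite -map_poly_comp.
by apply: eq_map_poly => a /=; rewrite fmorph_rat.
Qed.
Lemma Tr_conj m : odd m -> conjc w = w ^+ m -> forall x y, Tr x y -> Tr (conjc x) (conjc y).
Proof.
move=> om cw x y [q [-> ->]]; rewrite !ev_conj.
have -> : conjc (- w) = (- w) ^+ m.
  have -> : conjc (- w) = - conjc w by case: w {cw} => a b; simpc.
  by rewrite cw exprNn -signr_odd om mulN1r.
rewrite cw; apply: Tr_eval.
by exists 'X^m; rewrite /ev map_polyXn !hornerXn.
Qed.

Definition TM m n (X Y : 'M[R[i]]_(m, n)) := forall i j, Tr (X i j) (Y i j).
Arguments TM {m n}.
Lemma TM_add m n (X Y X' Y' : 'M_(m, n)) : TM X Y -> TM X' Y' -> TM (X + X') (Y + Y').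
Proof. by move=> H H' i j; rewrite !mxE; apply: Tr_add. Qed.
Lemma TM_opp m n (X Y : 'M_(m, n)) : TM X Y -> TM (- X) (- Y).
Proof. by move=> H i j; rewrite !mxE; apply: Tr_opp. Qed.
Lemma TM_mul m n p (X Y : 'M_(m, n)) (X' Y' : 'M_(n, p)) :
  TM X Y -> TM X' Y' -> TM (X *m X') (Y *m Y').
Proof. by move=> H H' i j; rewrite !mxE; apply: Tr_sum => l; apply: Tr_mul. Qed.
Lemma TM_scale m n a b (X Y : 'M_(m, n)) : Tr a b -> TM X Y -> TM (a *: X) (b *: Y).
Proof. by move=> h H i j; rewrite !mxE; apply: Tr_mul. Qed.
Lemma TM_1 n : TM (1%:M : 'M_n) 1%:M.
Proof. by move=> i j; rewrite !mxE; apply: Tr_nat. Qed.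
Lemma TM_adj m' m n : odd m' -> conjc w = w ^+ m' ->
  forall (X Y : 'M_(m, n)), TM X Y -> TM (adjmx X) (adjmx Y).
Proof. move=> om cw X Y H i j; rewrite /adjmx !mxE. exact: (Tr_conj om cw (H j i)). Qed.
End Track.

Section Mx.
Variable R : realType.
Lemma adjD m n (X Y : 'M[R[i]]_(m, n)) : adjmx (X + Y) = adjmx X + adjmx Y.
Proof. by apply/matrixP => i j; rewrite /adjmx !mxE rmorphD. Qed.
Lemma adjZ m n a (X : 'M[R[i]]_(m, n)) : adjmx (a *: X) = conjc a *: adjmx X.
Proof. by apply/matrixP => i j; rewrite /adjmx !mxE rmorphM. Qed.
Lemma adjM m n p (X : 'M[R[i]]_(m, n)) (Y : 'M[R[i]]_(n, p)) :
  adjmx (X *m Y) = adjmx Y *m adjmx X.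
Proof.
apply/matrixP => i j; rewrite /adjmx !mxE rmorph_sum; apply: eq_bigr => l _.
by rewrite !mxE rmorphM mulrC.
Qed.
Lemma adjT m n p q (X : 'M[R[i]]_(m, n)) (Y : 'M[R[i]]_(p, q)) :
  adjmx (X *t Y) = adjmx X *t adjmx Y.
Proof. by apply/matrixP => i j; rewrite /adjmx !mxE rmorphM. Qed.
Lemma adj1 n : adjmx (1%:M : 'M[R[i]]_n) = 1%:M.
Proof. by apply/matrixP => i j; rewrite /adjmx !mxE rmorph_nat eq_sym. Qed.
Lemma tensDl m n p q (X Y : 'M[R[i]]_(m, n)) (Z : 'M[R[i]]_(p, q)) :
  (X + Y) *t Z = X *t Z + Y *t Z.
Proof. by apply/matrixP => i j; rewrite !mxE mulrDl. Qed.
Lemma tensZl m n p q a (X : 'M[R[i]]_(m, n)) (Z : 'M[R[i]]_(p, q)) :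
  (a *: X) *t Z = a *: (X *t Z).
Proof. by apply/matrixP => i j; rewrite !mxE mulrA. Qed.
Lemma tensZr m n p q a (X : 'M[R[i]]_(m, n)) (Z : 'M[R[i]]_(p, q)) :
  X *t (a *: Z) = a *: (X *t Z).
Proof. by apply/matrixP => i j; rewrite !mxE mulrCA. Qed.
Lemma tens11 m n : (1%:M : 'M[R[i]]_m) *t (1%:M : 'M[R[i]]_n) = 1%:M.
Proof.
apply/matrixP => i j.
case: (mxtens_indexP i) => i1 i2; case: (mxtens_indexP j) => j1 j2.
rewrite tensmxE !mxE -natrM (inj_eq (can_inj (@mxtens_indexK m n))).
by rewrite xpair_eqE mulnb.
Qed.
End Mx.
Section Lam.
Variable R : realType.
Variable c : R[i].
Hypothesis hc : c * conjc c = 1.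
Definition Lc : 'M[R[i]]_2 :=
  \matrix_(i < 2, j < 2)
    (if (i == 0%N :> nat) && (j == 1%N :> nat) then 1
     else if (i == 1%N :> nat) && (j == 0%N :> nat) then c
     else 0).
Lemma LcA : adjmx Lc = conjc c *: Lc.
Proof.
apply/matrixP => a b; rewrite /adjmx !mxE !(fun_if conjc) rmorph0 rmorph1.
case: a => [[|[|a]]] // ha; case: b => [[|[|b]]] // hb; rewrite /= ?mulr0 ?mulr1 //.
by rewrite mulrC hc.
Qed.
Lemma LcL : Lc *m adjmx Lc = 1%:M.
Proof.
rewrite LcA; apply/matrixP => a b; rewrite !mxE big_ord_recr big_ord_recr big_ord0 /= !mxE.
case: a => [[|[|a]]] // ha; case: b => [[|[|b]]] // hb; rewrite /= ?mulr0 ?mulr1 ?mul0r ?mul1r ?add0r ?addr0 //.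
by rewrite mulrC hc.
Qed.
Lemma LcL' : adjmx Lc *m Lc = 1%:M.
Proof.
rewrite LcA; apply/matrixP => a b; rewrite !mxE big_ord_recr big_ord_recr big_ord0 /= !mxE.
case: a => [[|[|a]]] // ha; case: b => [[|[|b]]] // hb; rewrite /= ?mulr0 ?mulr1 ?mul0r ?mul1r ?add0r ?addr0 //.
all: by rewrite mulrC hc.
Qed.
End Lam.
Section Main.
Variable R : realType.
Variables (d : nat) (A B : 'M[R[i]]_d).
Lemma expU a : a * conjc a = 1 ->
  (A + a *: B) *m adjmx (A + a *: B) =
  (A *m adjmx A + B *m adjmx B) + (conjc a *: (A *m adjmx B) + a *: (B *m adjmx A)).
Proof.
move=> ha; rewrite adjD adjZ mulmxDl !mulmxDr -!scalemxAl -!scalemxAr scalerA ha scale1r.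
by rewrite [_ *: (B *m _) + _]addrC addrACA.
Qed.
Lemma expU' a : a * conjc a = 1 ->
  adjmx (A + a *: B) *m (A + a *: B) =
  (adjmx A *m A + adjmx B *m B) + (a *: (adjmx A *m B) + conjc a *: (adjmx B *m A)).
Proof.
move=> ha; rewrite adjD adjZ mulmxDl !mulmxDr -!scalemxAl -!scalemxAr scalerA [conjc a * a]mulrC ha scale1r.
by rewrite [_ *: (adjmx B *m _) + _]addrC addrACA.
Qed.
Lemma half0 m n (T : 'M[R[i]]_(m, n)) : T = - T -> T = 0.
Proof.
move=> h; apply/matrixP => i j; move/matrixP: h => /(_ i j); rewrite !mxE => /eqP.
by rewrite -addr_eq0 -mulr2n mulrn_eq0 /= => /eqP.
Qed.

Lemma tens_unit (w : R[i]) (L : 'M[R[i]]_2) (hw : w * conjc w = 1)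
  (hLA : adjmx L = conjc (w ^+ 2) *: L) (hLL : L *m adjmx L = 1%:M)
  (hLL' : adjmx L *m L = 1%:M)
  (hU : unitary (A + w *: B)) (hU' : unitary (A + (- w) *: B)) :
  unitary (A *t 1%:M + B *t L).
Proof.
have hw' : (- w) * conjc (- w) = 1 by rewrite rmorphN mulrNN.
have cwN : conjc (- w) = - conjc w by rewrite rmorphN.
case: hU => h1 h2; case: hU' => h1' h2'.
move: h1 h1'; rewrite !expU // cwN !scaleNr -opprD => h1 h1'.
move: h2 h2'; rewrite !expU' // cwN !scaleNr -opprD => h2 h2'.
have T0 : conjc w *: (A *m adjmx B) + w *: (B *m adjmx A) = 0.
  by apply: half0; apply: (addrI (A *m adjmx A + B *m adjmx B)); rewrite h1 h1'.
have T0' : w *: (adjmx A *m B) + conjc w *: (adjmx B *m A) = 0.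
  by apply: half0; apply: (addrI (adjmx A *m A + adjmx B *m B)); rewrite h2 h2'.
have S1 : A *m adjmx A + B *m adjmx B = 1%:M by rewrite -h1 T0 addr0.
have S1' : adjmx A *m A + adjmx B *m B = 1%:M by rewrite -h2 T0' addr0.
have BA : B *m adjmx A = (- conjc (w ^+ 2)) *: (A *m adjmx B).
  have : conjc w *: (conjc w *: (A *m adjmx B) + w *: (B *m adjmx A)) = 0.
    by rewrite T0 scaler0.
  rewrite scalerDr !scalerA [conjc w * w]mulrC hw scale1r rmorphXn expr2.
  by move/eqP; rewrite addrC addr_eq0 scaleNr => /eqP.
have BA' : adjmx B *m A = (- w ^+ 2) *: (adjmx A *m B).
  have : w *: (w *: (adjmx A *m B) + conjc w *: (adjmx B *m A)) = 0.
    by rewrite T0' scaler0.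
  rewrite scalerDr !scalerA hw scale1r expr2.
  by move/eqP; rewrite addrC addr_eq0 scaleNr => /eqP.
have hw2 : w ^+ 2 * conjc (w ^+ 2) = 1 by rewrite rmorphXn -exprMn hw expr1n.
split.
  rewrite adjD !adjT adj1 mulmxDl !mulmxDr !tensmx_mul !mulmx1 !mul1mx hLL hLA BA.
  rewrite tensZr tensZl scaleNr addrA addrK -tensDl S1.
  exact: tens11.
rewrite adjD !adjT adj1 mulmxDl !mulmxDr !tensmx_mul !mulmx1 !mul1mx hLL' hLA BA'.
rewrite tensZr tensZl scalerA mulrN [conjc (w ^+ 2) * _]mulrC hw2 scaleN1r addrA addrK -tensDl S1'.
exact: tens11.
Qed.
End Main.

Section IZ.
Variable R : realType.
Variable z : R[i].
Lemma IZ_add x y : in_Z_half_zeta z x -> in_Z_half_zeta z y -> in_Z_half_zeta z (x + y).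
Proof.
move=> [p [m ->]] [q [n ->]]; exists (p * (2 ^+ n)%:P + q * (2 ^+ m)%:P), (m + n)%N.
rewrite rmorphD !rmorphM /= !map_polyC /= hornerD !hornerM !hornerC !rmorphXn /= exprD.
rewrite (_ : 2%:~R = 2 :> R[i]) //.
have h2 : (2 : R[i]) != 0 by rewrite pnatr_eq0.
by field; rewrite ?expf_neq0.
Qed.
Lemma IZ_mul x y : in_Z_half_zeta z x -> in_Z_half_zeta z y -> in_Z_half_zeta z (x * y).
Proof.
move=> [p [m ->]] [q [n ->]]; exists (p * q), (m + n)%N.
rewrite rmorphM /= hornerM exprD.
have h2 : (2 : R[i]) != 0 by rewrite pnatr_eq0.
by field; rewrite ?expf_neq0.
Qed.
Lemma IZ_nat n : in_Z_half_zeta z n%:R.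
Proof.
exists (n%:R)%:P, 0%N; rewrite map_polyC hornerC expr0 divr1 /=.
by rewrite rmorph_nat.
Qed.
Lemma IZ_X : in_Z_half_zeta z z.
Proof. by exists 'X, 0%N; rewrite map_polyX hornerX expr0 divr1. Qed.
End IZ.

Lemma ev_int (R : realType) (p : {poly int}) (x : R[i]) :
  ev (map_poly intr p) x = (map_poly intr p).[x].
Proof.
rewrite /ev -map_poly_comp; congr horner; apply: eq_map_poly => a /=.
by rewrite rmorph_int.
Qed.

Lemma sigma (R : realType) (w : R[i]) m' (om : odd m') (cw : conjc w = w ^+ m')
  (hkey : forall q, ev q w = 0 -> ev q (- w) = 0) d (A B : 'M[R[i]]_d)
  (hA : TM w A A) (hB : TM w B B) :
  unitary (A + w *: B) -> unitary (A + (- w) *: B).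
Proof.
move=> [u1 u2].
have hU : TM w (A + w *: B) (A + (- w) *: B) := TM_add hA (TM_scale (Tr_w w) hB).
have hUa := TM_adj om cw hU.
have z0 : forall x y, Tr w x y -> x = 0 -> y = 0.
  by move=> x y [q [-> ->]] /hkey.
have fin : forall (X Y : 'M[R[i]]_d), TM w X Y -> X = 1%:M -> Y = 1%:M.
  move=> X Y H hX; apply/eqP; rewrite -subr_eq0; apply/eqP/matrixP => i j.
  have := TM_add H (TM_opp (@TM_1 _ w d)) i j; rewrite !mxE => /z0 -> //.
  by rewrite hX !mxE subrr.
by split; [apply: (fin _ _ (TM_mul hU hUa)) | apply: (fin _ _ (TM_mul hUa hU))].
Qed.

Unset Implicit Arguments.

Theorem lemma2 (R : realType) (k d : nat) (hk : (2 <= k)%N)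
  (A B : 'M[R[i]]_d)
  (hA : forall i j, in_Z_half_zeta (zeta R (2 ^ k.-1)) (A i j))
  (hB : forall i j, in_Z_half_zeta (zeta R (2 ^ k.-1)) (B i j))
  (hU : unitary (A + zeta R (2 ^ k) *: B)) :
  unitary (A *t (1%:M : 'M[R[i]]_2) + B *t Lambda R k) /\
  (forall i j, in_Z_half_zeta (zeta R (2 ^ k.-1))
                 ((A *t (1%:M : 'M[R[i]]_2) + B *t Lambda R k) i j)).
Proof.
case: k hk hA hB hU => [|j] // hk hA hB hU.
have j0 : (0 < j)%N by [].
split; last first.
  move=> a b; rewrite !mxE; apply: IZ_add; apply: IZ_mul => //.
  - exact: IZ_nat.
  - case: ifP => _; first exact: (IZ_nat _ 1).
    case: ifP => _; [exact: IZ_X | exact: (IZ_nat _ 0)].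
set w := zeta R (2 ^ j.+1).
have E1 : zeta R (2 ^ j.+1.-1) = w ^+ 2 by rewrite zeta_sq.
have hw : w * conjc w = 1 := zeta_conj _ _.
have wM : w ^+ (2 ^ j) = -1 := zeta_half _ _.
have N0 := expn_gt0 2 j.+1.
have cw : conjc w = w ^+ (2 ^ j.+1).-1.
  have wN : w ^+ (2 ^ j.+1) = 1 := zeta_full _ N0.
  rewrite -(prednK N0) exprS in wN.
  by rewrite -[LHS]mulr1 -wN mulrA [conjc w * w]mulrC hw mul1r.
have om : odd (2 ^ j.+1).-1.
  have : odd ((2 ^ j.+1).-1).+1 = false by rewrite prednK // expnS oddM.
  by rewrite oddS => /negbFE.
have hkey : forall q, ev q w = 0 -> ev q (- w) = 0 := fun q => key j0 wM.
have TMA : forall M : 'M[R[i]]_d,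
    (forall a b, in_Z_half_zeta (zeta R (2 ^ j.+1.-1)) (M a b)) -> TM w M M.
  move=> M hM a b; have [p [m ->]] := hM a b; rewrite E1.
  apply: Tr_mul.
    have := Tr_eval (map_poly intr p) (Tr_mul (Tr_w w) (Tr_w w)).
    by rewrite mulrNN !ev_int expr2.
  have := Tr_rat w ((2 ^+ m)^-1); rewrite fmorphV rmorphXn /=.
  by rewrite (_ : ratr 2 = 2 :> R[i]) // rmorph_nat.
have hU' := sigma om cw hkey (TMA _ hA) (TMA _ hB) hU.
have hc : zeta R (2 ^ j) * conjc (zeta R (2 ^ j)) = 1 := zeta_conj _ _.
apply: (tens_unit hw _ (LcL hc) (LcL' hc) hU hU').
by rewrite (LcA hc) -E1.
Qed.
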